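(* Let $\pi$ be a stationary deterministic memoryless policy, $\hat q:\mathcal{S}\times\mathcal{A}\to\mathbb{R}$, $\omega>0$, $\Delta\ge0$, $\mathcal{S}_{\text{fix}}\subseteq\mathcal{S}$, and $\pi'=\pi_{\hat q,\pi,\mathcal{S}_{\text{fix}}}$. Assume $|\hat q(s,a)-q^\pi(s,a)|\le\omega$ for all $s\in\mathcal{S}\setminus\mathcal{S}_{\text{fix}}$ and $a\in\mathcal{A}$, and that $\pi$ is next-state $\Delta$-optimal on $\mathcal{S}\setminus\mathcal{S}_{\text{fix}}$. Then $\pi'$ is $(4\omega+\gamma\Delta)$-optimal on $\mathcal{S}\setminus\mathcal{S}_{\text{fix}}$.
   Context: An MDP is $M=(\mathcal{S},\mathcal{A},\mathcal{Q})$ with measurable state space $\mathcal{S}$, finite action set $\mathcal{A}=(\mathcal{A}_1,\dots,\mathcal{A}_{|\mathcal{A}|})$ (with a fixed ordering), and transition-reward kernel $\mathcal{Q}$ with marginals $P(\cdot|s,a)$ (next state) and reward distribution supported on $[0,1]$, $r(s,a)$ the mean reward; discount $\gamma\in(0,1)$. $v^\pi(s)=\mathbb{E}_{\pi,s}[\sum_{t\ge0}\gamma^tR_t]$, $q^\pi(s,a)=\mathbb{E}_{\pi,s,a}[\sum_{t\ge0}\gamma^tR_t]$; $v^\star=\sup_\pi v^\pi$ (attained by a stationary deterministic policy). A policy $\pi$ is $\Delta$-optimal on $\mathcal{S}'\subseteq\mathcal{S}$ if $v^\star(s)-v^\pi(s)\le\Delta$ for all $s\in\mathcal{S}'$; it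 is next-state $\Delta$-optimal on $\mathcal{S}'$ if $\int(v^\star(s')-v^\pi(s'))\,dP(s'|s,a)\le\Delta$ for all $s\in\mathcal{S}'$, $a\in\mathcal{A}$. CAPI update: $\pi_{\hat q,\pi,\mathcal{S}_{\text{fix}}}(s)=\arg\max_{a}\hat q(s,a)$ (ties broken by smallest index) if $s\notin\mathcal{S}_{\text{fix}}$ and $\hat q(s,\pi(s))+\omega<\max_a\hat q(s,a)-\omega$, and $=\pi(s)$ otherwise. *)

(* Defs.v *)
From HB Require Import structures.
From mathcomp Require Import all_boot all_order all_algebra.
From mathcomp Require Import all_classical all_reals all_analysis measurable_realfun.
Set Implicit Arguments. Unset Strict Implicit. Unset Printing Implicit Defensive.
Import Order.TTheory GRing.Theory Num.Theory.
Import numFieldNormedType.Exports.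
Local Open Scope classical_set_scope.
Local Open Scope ring_scope.

Section MDP.
Context {R : realType} {d : measure_display} {S : measurableType d} {k : nat}.
(* Action set A = 'I_k.+1 = (A_1, ..., A_{k+1}) ordered by index. *)
Notation Act := 'I_k.+1.

Definition is_kernel (P : S -> Act -> probability S R) : Prop :=
  forall (a : Act) (U : set S), measurable U ->
    measurable_fun [set: S] (fun s => P s a U : \bar R).

(* r s a : mean reward, rewards supported on [0,1] *)
Definition is_reward (r : S -> Act -> R) : Prop :=
  (forall s a, 0 <= r s a <= 1) /\ (forall a, measurable_fun setT (r ^~ a)).

Definition measurable_policy (pi : S -> Act) : Prop :=
  forall a : Act, measurable (pi @^-1` [set a]).

Variables (P : S -> Act -> probability S R) (r : S -> Act -> R) (gamma : R).

Definition Ppi (pi : S -> Act) (f : S -> R) : S -> R :=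
  fun s => \int[P s (pi s)]_(y in setT) f y.

(* E_{pi,s}[R_t] = (P_pi^t r_pi)(s) *)
Definition vterm (pi : S -> Act) (t : nat) : S -> R :=
  iter t (Ppi pi) (fun s => r s (pi s)).

Definition vpi (pi : S -> Act) (s : S) : R :=
  limn (series (fun t => gamma ^+ t * vterm pi t s)).

(* E_{pi,s,a}[R_t]: R_0 has mean r s a, later rewards follow pi *)
Definition qterm (pi : S -> Act) (s : S) (a : Act) (t : nat) : R :=
  match t with
  | 0 => r s a
  | t'.+1 => \int[P s a]_(y in setT) vterm pi t' y
  end.

Definition qpi (pi : S -> Act) (s : S) (a : Act) : R :=
  limn (series (fun t => gamma ^+ t * qterm pi s a t)).

(* v^*(s) = sup over (stationary deterministic) policies of v^pi(s) *)
Definition vstar (s : S) : R :=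
  sup [set vpi mu s | mu in measurable_policy].

Definition optimal_on (S' : set S) (Delta : R) (pi : S -> Act) : Prop :=
  forall s, S' s -> vstar s - vpi pi s <= Delta.

Definition next_state_optimal_on (S' : set S) (Delta : R) (pi : S -> Act) : Prop :=
  forall s, S' s -> forall a : Act,
    \int[P s a]_(y in setT) (vstar y - vpi pi y) <= Delta.

End MDP.

Definition maxA {R : realType} {k : nat} (f : 'I_k.+1 -> R) : R :=
  \big[Num.max/f ord0]_(i : 'I_k.+1) f i.

(* argmax with ties broken by the smallest index *)
Definition first_argmax {R : realType} {k : nat} (f : 'I_k.+1 -> R) : 'I_k.+1 :=
  odflt ord0 [pick i : 'I_k.+1 |
    [forall j : 'I_k.+1, (f j <= f i) && ((j < i)%N ==> (f j < f i))]].

Definition capi {R : realType} {T : Type} {k : nat}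
  (omega : R) (qhat : T -> 'I_k.+1 -> R) (pi : T -> 'I_k.+1) (Sfix : set T)
  (s : T) : 'I_k.+1 :=
  if (s \notin Sfix) && (qhat s (pi s) + omega < maxA (qhat s) - omega)
  then first_argmax (qhat s) else pi s.

(* Main.v *)
Require Import Defs.
From HB Require Import structures.
From mathcomp Require Import all_boot all_order all_algebra.
From mathcomp Require Import all_classical all_reals all_analysis measurable_realfun.
From mathcomp Require Import lra.
Import Order.TTheory GRing.Theory Num.Theory.
Import numFieldNormedType.Exports.
Local Open Scope classical_set_scope.
Local Open Scope ring_scope.

Section Aux.
Context {R : realType} {d : measure_display} {S : measurableType d} {k : nat}.

Lemma int_bnd (mu : probability S R) (f : S -> R) (B : R) :
  measurable_fun setT f -> (forall y, `|f y| <= B) ->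
  mu.-integrable setT (EFin \o f).
Proof.
move=> mf hB; apply: measurable_bounded_integrable => //.
  by have := @probability_setT _ _ _ mu; rewrite /= => ->; rewrite ltry.
exists B; split; first by rewrite num_real.
by move=> M BM y _ /=; apply: le_trans (hB y) (ltW BM).
Qed.

Lemma Rint_bnd (mu : probability S R) (f : S -> R) (a b : R) :
  measurable_fun setT f -> (forall y, a <= f y <= b) ->
  a <= \int[mu]_(y in setT) f y <= b.
Proof.
move=> mf hf.
have hi : mu.-integrable setT (EFin \o f).
  apply: (@int_bnd mu f (`|a| + `|b|)) => // y.
  have /andP[h1 h2] := hf y.
  have e1 := lerNnormlW (lexx `|a|); have e2 := ler_norm b.
  have e3 := normr_ge0 a; have e4 := normr_ge0 b.
  rewrite ler_norml; apply/andP; split; lra.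
have hc : forall c : R, mu.-integrable setT (EFin \o (fun=> c)).
  by move=> c; apply: (@int_bnd mu _ `|c|) => //.
have cst : forall c : R, \int[mu]_(y in setT) (fun=> c) y = c.
  by move=> c; rewrite Rintegral_cst //; have := @probability_setT _ _ _ mu; rewrite /= => ->; rewrite mulr1.
apply/andP; split.
  rewrite -[X in X <= _]cst; apply: le_Rintegral => // y _; by case/andP: (hf y).
rewrite -[X in _ <= X]cst; apply: le_Rintegral => // y _; by case/andP: (hf y).
Qed.

Lemma meas_pol (g : S -> 'I_k.+1 -> R) (mu : S -> 'I_k.+1) :
  measurable_policy mu -> (forall a, measurable_fun setT (g ^~ a)) ->
  measurable_fun setT (fun s => g s (mu s)).
Proof.
move=> hmu hg.
have -> : (fun s => g s (mu s)) =
  (fun s => \sum_(a <- index_enum 'I_k.+1) (\1_(mu @^-1` [set a]) s * g s a)).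
  apply/funext => s; rewrite (bigD1 (mu s)) //= indicE mem_set // mul1r big1 ?addr0 //.
  by move=> a /negbTE ha; rewrite indicE memNset ?mul0r //= => h; rewrite h eqxx in ha.
by apply: measurable_sum => a; apply: measurable_funM => //; exact: measurable_indic.
Qed.

Lemma meas_int (P : S -> 'I_k.+1 -> probability S R) (hP : is_kernel P) (f : S -> R) a :
  measurable_fun setT f -> (forall y, 0 <= f y) ->
  measurable_fun setT (fun s => \int[P s a]_(y in setT) f y).
Proof.
move=> mf f0; apply: measurableT_comp => //.
apply: (measurable_fun_integral_kernel (l := fun s => (P s a : {measure set S -> \bar R}))).
- by move=> U mU; exact: hP.
- by move=> y; rewrite lee_fin.
- exact/measurable_EFinP.
Qed.

End Aux.

Section MDPlem.
Context {R : realType} {d : measure_display} {S : measurableType d} {k : nat}.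
Variables (P : S -> 'I_k.+1 -> probability S R) (r : S -> 'I_k.+1 -> R) (gamma : R).
Hypotheses (hP : is_kernel P) (hr : is_reward r) (hg : 0 < gamma < 1).

Lemma g0 : 0 <= gamma. Proof. by case/andP: hg => /ltW. Qed.
Lemma g1 : gamma < 1. Proof. by case/andP: hg. Qed.

Lemma vterm_prop mu : measurable_policy mu -> forall t,
  measurable_fun setT (vterm P r mu t) /\ (forall s, 0 <= vterm P r mu t s <= 1).
Proof.
move=> hmu; elim => [|t [mt bt]].
  split; first exact: (@meas_pol _ _ _ _ r mu hmu (proj2 hr)).
  by move=> s; exact: (proj1 hr).
have -> : vterm P r mu t.+1 = Ppi P mu (vterm P r mu t) by [].
split.
  rewrite /Ppi; apply: (@meas_pol _ _ _ _ (fun s a => \int[P s a]_(y in setT) vterm P r mu t y)) => // a.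
  by apply: meas_int => // y; case/andP: (bt y).
by move=> s; rewrite /Ppi; exact: Rint_bnd.
Qed.

Lemma ser_cvg (u : R^nat) : (forall t, 0 <= u t <= 1) ->
  cvgn (series (fun t => gamma ^+ t * u t)).
Proof.
move=> hu; apply: (@series_le_cvg _ _ (geometric 1 gamma)).
- by move=> n; case/andP: (hu n) => h _; rewrite mulr_ge0 // exprn_ge0 // g0.
- by move=> n; rewrite /= mul1r exprn_ge0 // g0.
- move=> n; case/andP: (hu n) => h1 h2; rewrite /= mul1r ler_piMr //.
  by rewrite exprn_ge0 // g0.
- by apply: is_cvg_geometric_series; rewrite ger0_norm ?g0 ?g1.
Qed.

Lemma ser_E (u : R^nat) : (forall t, 0 <= u t <= 1) ->
  (limn (series (fun t => gamma ^+ t * u t)))%:E =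
  (\sum_(t <oo) ((gamma ^+ t * u t)%:E))%E.
Proof.
move=> hu; rewrite -EFin_lim ?ser_cvg //.
rewrite [X in lim (X @ _)](_ : _ = (fun n => \sum_(0 <= t < n) ((gamma ^+ t * u t)%:E))%E) //.
  by apply/funext => n /=; rewrite sumEFin.
exact: ser_cvg.
Qed.

Lemma ser_shift (u : R^nat) : cvgn (series u) ->
  limn (series u) = u 0%N + limn (series (fun n => u n.+1)).
Proof.
move=> cu.
have e : series (fun n => u n.+1) = (fun n => series u n.+1 - u 0%N).
  by apply/funext => n; rewrite /series /= big_nat_recl // addrC addKr.
have H : series (fun n => u n.+1) @ \oo --> limn (series u) - u 0%N.
  rewrite e; apply: cvgB; last exact: cvg_cst.
  by rewrite (cvg_shiftS (series u)).
by rewrite (cvg_lim _ H) // addrC subrK.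
Qed.

Lemma int_ser (mu : probability S R) (f : nat -> S -> R) :
  (forall t, measurable_fun setT (f t)) -> (forall t y, 0 <= f t y <= 1) ->
  \int[mu]_(y in setT) limn (series (fun t => gamma ^+ t * f t y)) =
  limn (series (fun t => gamma ^+ t * \int[mu]_(y in setT) f t y)).
Proof.
move=> mf bf.
have bI : forall t, 0 <= \int[mu]_(y in setT) f t y <= 1.
  by move=> t; exact: Rint_bnd.
apply: EFin_inj; rewrite ser_E //.
transitivity (fine (\int[mu]_(y in setT) (\sum_(t <oo) ((gamma ^+ t * f t y)%:E))%E))%:E.
  by congr EFin; rewrite /Rintegral; congr fine; apply: eq_integral => y _; exact: ser_E.
rewrite integral_nneseries //; last first.
  move=> n y _; rewrite lee_fin; case/andP: (bf n y) => h _.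
  by rewrite mulr_ge0 // exprn_ge0 // g0.
  move=> n; apply/measurable_EFinP; apply: measurable_funM => //.
rewrite (@eq_eseriesr _ _ (fun t => (gamma ^+ t * \int[mu]_(y in setT) f t y)%:E)).
  rewrite -ser_E //= ; by [].
move=> t _.
have hi : mu.-integrable setT (EFin \o (fun y => gamma ^+ t * f t y)).
  apply: (@int_bnd _ _ _ mu _ 1).
    by apply: measurable_funM.
  move=> y; case/andP: (bf t y) => h1 h2.
  have e0 : 0 <= gamma ^+ t by rewrite exprn_ge0 // g0.
  rewrite ger0_norm ?mulr_ge0 // mulr_ile1 //.
  by rewrite exprn_ile1 // ?g0 // ltW // g1.
rewrite -RintegralZl //; last first.
  apply: (@int_bnd _ _ _ mu _ 1) => // y; case/andP: (bf t y) => h1 h2.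
  by rewrite ger0_norm.
by rewrite /Rintegral fineK //; exact: integrable_fin_num.
Qed.

Lemma bell_v mu : measurable_policy mu -> forall s,
  vpi P r gamma mu s = r s (mu s) + gamma * \int[P s (mu s)]_(y in setT) vpi P r gamma mu y.
Proof.
move=> hmu s.
have mv t := (vterm_prop _ hmu t).1.
have bv t := (vterm_prop _ hmu t).2.
rewrite /vpi ser_shift; last by apply: ser_cvg => t; exact: bv.
rewrite expr0 mul1r; congr (_ + _).
rewrite int_ser //.
have -> : (fun n => gamma ^+ n.+1 * vterm P r mu n.+1 s) =
   gamma *: (fun t => gamma ^+ t * \int[P s (mu s)]_(y in setT) vterm P r mu t y).
  by apply/funext => n; rewrite exprS -mulrA.
rewrite lim_seriesZ //; apply: ser_cvg => t; exact: Rint_bnd.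
Qed.

Lemma bell_q mu : measurable_policy mu -> forall s a,
  qpi P r gamma mu s a = r s a + gamma * \int[P s a]_(y in setT) vpi P r gamma mu y.
Proof.
move=> hmu s a.
have mv t := (vterm_prop _ hmu t).1.
have bv t := (vterm_prop _ hmu t).2.
rewrite /qpi ser_shift; last first.
  by apply: ser_cvg => -[|t] /=; [exact: (proj1 hr) | exact: Rint_bnd].
rewrite expr0 mul1r; congr (_ + _).
rewrite int_ser //.
have -> : (fun n => gamma ^+ n.+1 * qterm P r mu s a n.+1) =
   gamma *: (fun t => gamma ^+ t * \int[P s a]_(y in setT) vterm P r mu t y).
  by apply/funext => n; rewrite exprS -mulrA.
rewrite lim_seriesZ //; apply: ser_cvg => t; exact: Rint_bnd.
Qed.

Definition Bd := limn (series (geometric 1 gamma)).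

Lemma vpi_meas mu : measurable_policy mu -> measurable_fun setT (vpi P r gamma mu).
Proof.
move=> hmu.
have mv t := (vterm_prop _ hmu t).1.
have bv t := (vterm_prop _ hmu t).2.
apply: (@measurable_fun_cvg _ _ _ _ (fun n s => series (fun t => gamma ^+ t * vterm P r mu t s) n)).
  move=> n; rewrite /series /=; apply: measurable_sum => i.
  exact: measurable_funM.
by move=> x _; apply: ser_cvg => t; exact: bv.
Qed.

Lemma vpi_bnd mu : measurable_policy mu -> forall s, 0 <= vpi P r gamma mu s <= Bd.
Proof.
move=> hmu s.
have bv t := (vterm_prop _ hmu t).2.
have cv : cvgn (series (fun t => gamma ^+ t * vterm P r mu t s)).
  by apply: ser_cvg => t; exact: bv.
apply/andP; split.
  apply: limr_ge => //; near=> n; rewrite /series /=; apply: sumr_ge0 => i _.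
  by case/andP: (bv i s) => h _; rewrite mulr_ge0 // exprn_ge0 // g0.
apply: lim_series_le => //.
  by apply: is_cvg_geometric_series; rewrite ger0_norm ?g0 ?g1.
move=> n; case/andP: (bv n s) => h1 h2; rewrite /= mul1r ler_piMr //.
by rewrite exprn_ge0 // g0.
Unshelve. all: by end_near.
Qed.

End MDPlem.

Section Argmax.
Context {R : realType} {k : nat}.

Definition fa_pred (f : 'I_k.+1 -> R) (i : 'I_k.+1) :=
  [forall j : 'I_k.+1, (f j <= f i) && ((j < i)%N ==> (f j < f i))].

Lemma maxA_ge (f : 'I_k.+1 -> R) j : f j <= Defs.maxA f.
Proof.
rewrite /Defs.maxA.
have : j \in index_enum 'I_k.+1 by rewrite mem_index_enum.
elim: (index_enum 'I_k.+1) => [|i s IH] //=.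
rewrite in_cons big_cons => /orP[/eqP <-| /IH h]; rewrite le_max ?lexx //.
by rewrite h orbT.
Qed.

Lemma maxA_le (f : 'I_k.+1 -> R) M : (forall j, f j <= M) -> Defs.maxA f <= M.
Proof.
move=> h; rewrite /Defs.maxA; apply: (big_ind (fun x => x <= M)) => //.
by move=> x y hx hy; rewrite ge_max hx hy.
Qed.

Lemma maxA_att (f : 'I_k.+1 -> R) : exists i, Defs.maxA f = f i.
Proof.
rewrite /Defs.maxA; apply: (big_ind (fun x => exists i, x = f i)) => [|x y [i ->] [j ->]|i _].
- by exists ord0.
- by case: (leP (f i) (f j)) => h; [exists j | exists i].
- by exists i.
Qed.

Lemma fa_exists (f : 'I_k.+1 -> R) : exists i, fa_pred f i.
Proof.
have [i0 hi0] := maxA_att f.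
have hP0 : f i0 == Defs.maxA f by rewrite hi0 eqxx.
have [i Pi Hmin] := @arg_minnP _ i0 (fun i => f i == Defs.maxA f) (fun i => nat_of_ord i) hP0.
exists i; apply/forallP => j; apply/andP; split.
  by rewrite (eqP Pi) maxA_ge.
apply/implyP => ji; rewrite lt_neqAle (eqP Pi) maxA_ge; apply/andP; split => //.
apply/negP => /eqP e.
have := Hmin j; rewrite e eqxx => /(_ isT).
by rewrite leqNgt ji.
Qed.

Lemma fa_max (f : 'I_k.+1 -> R) i : fa_pred f i -> f i = Defs.maxA f.
Proof.
move=> /forallP h; apply/le_anti; apply/andP; split; first exact: maxA_ge.
by apply: maxA_le => j; case/andP: (h j).
Qed.

Lemma fa_unique (f : 'I_k.+1 -> R) i j : fa_pred f i -> fa_pred f j -> i = j.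
Proof.
move=> /forallP hi /forallP hj; apply/val_inj; case: (ltngtP i j) => // h.
- have := hj i; rewrite h /= => /andP[_ lt]; have := hi j => /andP[le _].
  by move: le; rewrite (lt_geF lt).
- have := hi j; rewrite h /= => /andP[_ lt]; have := hj i => /andP[le _].
  by move: le; rewrite (lt_geF lt).
Qed.

Lemma first_argmaxP (f : 'I_k.+1 -> R) : fa_pred f (first_argmax f).
Proof.
rewrite /first_argmax; case: pickP => [i hi | h] //=.
have [i hi] := fa_exists f.
by have := h i; rewrite /fa_pred in hi; rewrite hi.
Qed.

Lemma first_argmax_eq (f : 'I_k.+1 -> R) a : (first_argmax f == a) = fa_pred f a.
Proof.
apply/eqP/idP => [<-|h]; first exact: first_argmaxP.
exact: fa_unique (first_argmaxP f) h.
Qed.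

End Argmax.

Lemma capi_meas {R : realType} {d : measure_display} {S : measurableType d} {k : nat}
  (pi : S -> 'I_k.+1) (qhat : S -> 'I_k.+1 -> R) (omega : R) (Sfix : set S) :
  measurable_policy pi -> (forall a, measurable_fun setT (qhat ^~ a)) ->
  measurable Sfix -> measurable_policy (capi omega qhat pi Sfix).
Proof.
move=> hpi hq hS a.
pose c := fun s => (s \notin Sfix) && (qhat s (pi s) + omega < Defs.maxA (qhat s) - omega).
have mmax : measurable_fun setT (fun s => Defs.maxA (qhat s)).
  rewrite /Defs.maxA.
  suff H : forall l, measurable_fun setT (fun s => \big[Num.max/qhat s ord0]_(i <- l) qhat s i).
    exact: H.
  elim => [|i l IH].
    by under eq_fun do rewrite big_nil; exact: hq.
  under eq_fun do rewrite big_cons /=.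
  exact: (measurable_maxr (hq i) IH).
have mc : measurable_fun setT c.
  apply: measurable_and.
    apply: measurable_neg; apply: (measurable_fun_bool true); rewrite setTI.
    have -> : (fun s => s \in Sfix) @^-1` [set true] = Sfix.
      by apply/seteqP; split => x /= h; [exact: set_mem h | exact: mem_set h].
    exact: hS.
  apply: measurable_fun_ltr.
    apply: measurable_funD => //; exact: (@meas_pol _ _ _ _ qhat pi hpi hq).
  exact: measurable_funB.
have mfa : measurable_fun setT (fun s => fa_pred (qhat s) a).
  rewrite /fa_pred.
  have -> : (fun s => [forall j : 'I_k.+1, (qhat s j <= qhat s a) && ((j < a)%N ==> (qhat s j < qhat s a))]) =
    (fun s => all (fun j => (qhat s j <= qhat s a) && ((j < a)%N ==> (qhat s j < qhat s a))) (enum 'I_k.+1)).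
    apply/funext => s; apply/idP/idP => [/forallP H | /allP H].
      by apply/allP => j _; exact: H.
    by apply/forallP => j; apply: H; rewrite mem_enum.
  elim: (enum 'I_k.+1) => [|j l IH] /=; first exact: measurable_cst.
  apply: measurable_and => //; apply: measurable_and; first exact: measurable_fun_ler.
  case: ((j < a)%N) => /=; first exact: measurable_fun_ltr.
  exact: measurable_cst.
have mpi : measurable_fun setT (fun s => pi s == a).
  apply: (measurable_fun_bool true); rewrite setTI.
  have -> : (fun s => pi s == a) @^-1` [set true] = pi @^-1` [set a].
    by apply/seteqP; split => x /= /eqP.
  exact: hpi.
have mall : measurable_fun setT (fun s => (c s && fa_pred (qhat s) a) || (~~ c s && (pi s == a))).
  apply: measurable_or; apply: measurable_and => //; exact: measurable_neg.
have -> : capi omega qhat pi Sfix @^-1` [set a] =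
    (fun s => (c s && fa_pred (qhat s) a) || (~~ c s && (pi s == a))) @^-1` [set true].
  apply/seteqP; split => s /=.
    rewrite /capi -/(c s); case: (c s) => /=.
      by move=> <-; rewrite orbF; exact: first_argmaxP.
    by move=> ->; rewrite eqxx.
  move=> h; rewrite /capi -/(c s); move: h; case: (c s) => /= h.
    rewrite orbF in h; exact: fa_unique (first_argmaxP _) h.
  by move: h => /= /eqP.
by have := mall measurableT [set true] I; rewrite setTI.
Qed.

Section Arith.
Context {R : realType}.
Implicit Types (x y a b c e f g B M om : R).

Lemma ar1 x c a b : x <= c + a -> x - (c + b) <= a - b.
Proof. lra. Qed.

Lemma ar2 a b B : 0 <= a <= B -> 0 <= b <= B -> - B <= a - b <= B.
Proof. move=> /andP[h1 h2] /andP[h3 h4]; apply/andP; split; lra. Qed.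

Lemma ar3 M g : 0 <= g -> g < 1 -> M <= g * M -> M <= 0.
Proof. nra. Qed.

Lemma ar4 x y M : x - y <= M -> M <= 0 -> x <= y.
Proof. lra. Qed.

Lemma ar5 qa qha M qf qhf om : - om <= qha - qa -> qha <= M -> qhf = M ->
  qhf - qf <= om -> 0 < om -> qa <= qf + 4 * om.
Proof. lra. Qed.

Lemma ar6 qa qha M qp qhp om : - om <= qha - qa -> qha <= M ->
  M - om <= qhp + om -> qhp - qp <= om -> qa <= qp + 4 * om.
Proof. lra. Qed.

Lemma ar7 ra vs qa wa rp wp vp qp om gD :
  qa = ra + wa -> vs - wa <= gD -> qp = rp + wp -> wp <= vp ->
  qa <= qp + 4 * om -> ra + vs - (rp + vp) <= 4 * om + gD.
Proof. lra. Qed.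

End Arith.

Theorem lemma3p4 (R : realType) (d : measure_display) (S : measurableType d)
  (k : nat) (P : S -> 'I_k.+1 -> probability S R) (r : S -> 'I_k.+1 -> R)
  (gamma : R)
  (hP : is_kernel P) (hr : is_reward r) (hgamma : 0 < gamma < 1)
  (hstar : exists pistar : S -> 'I_k.+1, measurable_policy pistar /\
             forall s, vpi P r gamma pistar s = vstar P r gamma s)
  (pi : S -> 'I_k.+1) (hpi : measurable_policy pi)
  (qhat : S -> 'I_k.+1 -> R) (hqhat : forall a, measurable_fun setT (qhat ^~ a))
  (omega Delta : R) (Sfix : set S) (hSfix : measurable Sfix) :
  0 < omega -> 0 <= Delta ->
  (forall s a, ~ Sfix s -> `|qhat s a - qpi P r gamma pi s a| <= omega) ->
  next_state_optimal_on P r gamma (~` Sfix) Delta pi ->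
  optimal_on P r gamma (~` Sfix) (4 * omega + gamma * Delta)
    (capi omega qhat pi Sfix).
Proof.
move=> om0 D0 hq hns s hs.
have gg0 : 0 <= gamma by case/andP: hgamma => /ltW.
have gg1 : gamma < 1 by case/andP: hgamma.
have hpi' : measurable_policy (capi omega qhat pi Sfix) := @capi_meas _ _ _ _ pi qhat omega Sfix hpi hqhat hSfix.
set pi' := capi omega qhat pi Sfix in hpi' *.
case: hstar => pis [hpis hvs].
have vsE : vstar P r gamma = vpi P r gamma pis by apply/funext => y; rewrite hvs.
have bv := bell_v P r gamma hP hr hgamma.
have bq := bell_q P r gamma hP hr hgamma.
have vm := vpi_meas P r gamma hP hr hgamma.
have [B hB] : exists B, forall mu, measurable_policy mu -> forall y,
    0 <= vpi P r gamma mu y <= B.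
  by eexists; exact: (vpi_bnd P r gamma hP hr hgamma).
have intv : forall mu, measurable_policy mu -> forall m : probability S R,
    m.-integrable setT (EFin \o vpi P r gamma mu).
  move=> mu hmu m; apply: (@int_bnd _ _ _ m _ B); first exact: vm.
  by move=> y; have /andP[h1 h2] := hB mu hmu y; rewrite ger0_norm.
set w := vpi P r gamma pi.
set v' := vpi P r gamma pi'.
have wq : forall y a, qpi P r gamma pi y a = r y a + gamma * \int[P y a]_(z in setT) w z.
  by move=> y a; exact: bq.
have C1 : forall y, w y <= qpi P r gamma pi y (pi' y).
  move=> y; have wE : w y = qpi P r gamma pi y (pi y) by rewrite /w bv // bq.
  rewrite /pi' /capi; case: ifP => [/andP[hy hlt] | _]; last by rewrite wE.
  have nS : ~ Sfix y by move=> h; rewrite mem_set in hy.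
  have e := fa_max (qhat y) _ (first_argmaxP _).
  have h1 := hq y (first_argmax (qhat y)) nS; have h2 := hq y (pi y) nS.
  rewrite ler_norml in h1; rewrite ler_norml in h2.
  case/andP: h1 => h1 h1'; case/andP: h2 => h2 h2'.
  rewrite wE; lra.
have C2 : forall y, w y <= v' y.
  pose D := fun y => w y - v' y.
  have Dle : forall y, D y <= gamma * \int[P y (pi' y)]_(z in setT) D z.
    move=> y; rewrite /D RintegralB //; [|exact: intv|exact: intv].
    have := C1 y; rewrite wq /v' (bv pi' hpi' y) mulrBr; exact: ar1.
  have Db : forall y, - B <= D y <= B.
    by move=> y; rewrite /D; exact: ar2 (hB pi hpi y) (hB pi' hpi' y).
  have hs0 : has_sup (range D).
    split; first by exists (D s), s.
    by exists B => _ [y _ <-]; case/andP: (Db y).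
  set M := sup (range D).
  have ub : forall y, D y <= M by move=> y; apply: (ub_le_sup hs0.2); exists y.
  have mD : measurable_fun setT D by apply: measurable_funB; exact: vm.
  have hIM : forall y, \int[P y (pi' y)]_(z in setT) D z <= M.
    have hb : forall z, - B <= D z <= M.
      by move=> z; apply/andP; split; [case/andP: (Db z) | exact: ub].
    by move=> y; case/andP: (@Rint_bnd _ _ _ (P y (pi' y)) D (- B) M mD hb).
  have MM : M <= gamma * M.
    apply: ge_sup; first by exists (D s), s.
    move=> _ [y _ <-]; apply: le_trans (Dle y) _; exact: ler_wpM2l.
  have M0 : M <= 0 by exact: ar3 gg0 gg1 MM.
  by move=> y; exact: ar4 (ub y) M0.
set a := pis s.
have e1 : vstar P r gamma s = r s a + gamma * \int[P s a]_(z in setT) vpi P r gamma pis z.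
  by rewrite vsE; exact: bv.
have e2 := wq s a.
have hns' := hns s hs a.
rewrite vsE RintegralB in hns'; try (by []); try (exact: intv).
have e3 := wq s (pi' s).
have e4 : v' s = r s (pi' s) + gamma * \int[P s (pi' s)]_(z in setT) v' z by exact: bv.
have le1 : \int[P s (pi' s)]_(z in setT) w z <= \int[P s (pi' s)]_(z in setT) v' z.
  apply: le_Rintegral => //; try (exact: intv); by move=> z _; exact: C2.
have le1' := ler_wpM2l gg0 le1.
have le3 := ler_wpM2l gg0 hns'; rewrite mulrBr in le3.
have nS : ~ Sfix s by [].
have hsn : s \notin Sfix by apply/negP => /set_mem.
have le2 : qpi P r gamma pi s a <= qpi P r gamma pi s (pi' s) + 4 * omega.
  have h3 := hq s a nS; rewrite ler_norml in h3; case/andP: h3 => h3 h3'.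
  have h4 := maxA_ge (qhat s) a.
  rewrite /pi' /capi; case: ifP => [/andP[hy hlt] | hc].
    have e := fa_max (qhat s) _ (first_argmaxP _).
    have h1 := hq s (first_argmax (qhat s)) nS.
    rewrite ler_norml in h1; case/andP: h1 => h1 h1'.
    exact: ar5 h3 h4 e h1' om0.
  rewrite hsn /= in hc; move/negbT: hc; rewrite -leNgt => hc.
  have h2 := hq s (pi s) nS; rewrite ler_norml in h2; case/andP: h2 => h2 h2'.
  exact: ar6 h3 h4 hc h2'.
rewrite e1 e4; exact: ar7 e2 le3 e3 le1' le2.
Qed.
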